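(* Let $T\in\mathbb R^{m\times n}$ be injective and satisfy the positive cone condition, and $y\in\mathbb R^m$. Then for every $\lambda>0$, $$|x_\mu^i|\le|x_\lambda^i|\qquad\text{for all }i\in I(\lambda)\text{ and all }0<\mu\le\lambda.$$
   Context: For $\lambda>0$, $x_\lambda$ is the unique minimizer of $x\mapsto\frac{\lambda}{2}\|Tx-y\|_2^2+\|x\|_1$ on $\mathbb R^n$; $I(\lambda)=\{i:x_\lambda^i\ne0\}$. Positive cone condition: for every nonempty $J\subset\{1,\dots,n\}$, with $T^J$ the submatrix of columns indexed by $J$ and $S_J=((T^J)^TT^J)^{-1}$, one has $(S_J)_{i,i}-\sum_{j\ne i}|(S_J)_{i,j}|\ge0$ for all $i\in J$. *)

(* Defs.v *)
From HB Require Import structures.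
From mathcomp Require Import all_boot all_order all_algebra.
From mathcomp Require Import reals.
Set Implicit Arguments. Unset Strict Implicit. Unset Printing Implicit Defensive.
Import Order.TTheory GRing.Theory Num.Theory.
Local Open Scope ring_scope.

Definition lasso_obj (R : realType) (m n : nat) (T : 'M[R]_(m, n)) (y : 'cV[R]_m)
    (lam : R) (x : 'cV[R]_n) : R :=
  lam / 2 * (\sum_(i < m) ((T *m x - y) i 0) ^+ 2) + \sum_(j < n) `|x j 0|.

Definition is_lasso_minimizer (R : realType) (m n : nat) (T : 'M[R]_(m, n))
    (y : 'cV[R]_m) (lam : R) (x : 'cV[R]_n) : Prop :=
  forall z : 'cV[R]_n, lasso_obj T y lam x <= lasso_obj T y lam z.

(* T^J : the submatrix of the columns of T indexed by J (in increasing order) *)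
Definition col_submx (R : realType) (m n : nat) (T : 'M[R]_(m, n)) (J : {set 'I_n}) :
    'M[R]_(m, #|J|) :=
  colsub (fun k : 'I_#|J| => enum_val k) T.

Definition S_of (R : realType) (m n : nat) (T : 'M[R]_(m, n)) (J : {set 'I_n}) :
    'M[R]_#|J| :=
  invmx ((col_submx T J)^T *m col_submx T J).

Definition positive_cone_condition (R : realType) (m n : nat) (T : 'M[R]_(m, n)) : Prop :=
  forall J : {set 'I_n}, J != set0 ->
    forall k : 'I_#|J|,
      0 <= S_of T J k k - \sum_(l < #|J| | l != k) `|S_of T J k l|.

(* Main.v *)
Require Import Defs.
From HB Require Import structures.
From mathcomp Require Import all_boot all_order all_algebra.
From mathcomp Require Import reals.
From mathcomp Require Import ring lra.
Set Implicit Arguments. Unset Strict Implicit. Unset Printing Implicit Defensive.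
Import Order.TTheory GRing.Theory Num.Theory.
Local Open Scope ring_scope.

Section Gen.
Variable R : realType.

Lemma sgM (x : R) : Num.sg x * x = `|x|.
Proof.
case: (ltrgt0P x) => [h|h|->]; last by rewrite mulr0.
- by rewrite gtr0_sg // mul1r.
- by rewrite ltr0_sg // mulN1r.
Qed.

Lemma sg_le1 (x : R) : `|Num.sg x| <= 1.
Proof. by rewrite normr_sg; case: (x != 0). Qed.

Lemma eps_lemma (a C : R) : 0 <= C -> (forall e, 0 < e -> e < 1 -> a <= e * C) -> a <= 0.
Proof.
move=> C0 H; rewrite leNgt; apply/negP => a0.
have hD : 0 < C + a + 1 by lra.
have e0 : 0 < a / (C + a + 1) by rewrite divr_gt0.
have e1 : a / (C + a + 1) < 1 by rewrite ltr_pdivrMr // mul1r; lra.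
have := H _ e0 e1; rewrite mulrAC ler_pdivlMr //.
nra.
Qed.

Lemma sum_delta k (F : 'I_k -> R) (j : 'I_k) : \sum_i F i * (i == j)%:R = F j.
Proof.
rewrite (bigD1 j) //= eqxx mulr1 big1 ?addr0 // => i /negbTE ->; by rewrite mulr0.
Qed.
End Gen.
Section Lasso.
Variables (R : realType) (m n : nat) (T : 'M[R]_(m, n)) (y : 'cV[R]_m).

Definition G : 'M[R]_n := T^T *m T.
Definition hv : 'cV[R]_n := T^T *m y.
Definition gr (x : 'cV[R]_n) : 'cV[R]_n := hv - G *m x.

Lemma dotE k (u v : 'cV[R]_k) : (u^T *m v) 0 0 = \sum_i u i 0 * v i 0.
Proof. by rewrite !mxE; apply: eq_bigr => i _; rewrite mxE. Qed.

Lemma cross_term (x z : 'cV[R]_n) :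
  \sum_i (T *m x - y) i 0 * (T *m z) i 0 = - \sum_j gr x j 0 * z j 0.
Proof.
rewrite -[LHS]dotE mulmxA.
have -> : (T *m x - y)^T *m T = (T^T *m (T *m x - y))^T by rewrite trmx_mul trmxK.
rewrite dotE.
rewrite -sumrN; apply: eq_bigr => j _.
rewrite /gr /G /hv mulmxBr mulmxA !mxE; ring.
Qed.

Lemma obj_expand lam (x z : 'cV[R]_n) :
  lasso_obj T y lam (x + z) = lasso_obj T y lam x - lam * (\sum_j gr x j 0 * z j 0)
   + lam / 2 * (\sum_i ((T *m z) i 0) ^+ 2) + \sum_j (`|x j 0 + z j 0| - `|x j 0|).
Proof.
rewrite /lasso_obj.
have E1 : \sum_i ((T *m (x + z) - y) i 0) ^+ 2 =
   \sum_i ((T *m x - y) i 0) ^+ 2 + 2 * (\sum_i (T *m x - y) i 0 * (T *m z) i 0)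
   + \sum_i ((T *m z) i 0) ^+ 2.
  rewrite mulr_sumr -!big_split /=; apply: eq_bigr => i _.
  rewrite mulmxDr !mxE; ring.
rewrite E1 cross_term.
have E2 : \sum_j `|(x + z) j 0| = \sum_j `|x j 0| + \sum_j (`|x j 0 + z j 0| - `|x j 0|).
  rewrite -big_split /=; apply: eq_bigr => j _; rewrite mxE; ring.
by rewrite E2; field.
Qed.


Definition ej (j : 'I_n) : 'cV[R]_n := delta_mx j 0.

Definition KKT t (x : 'cV[R]_n) :=
  forall j, `|gr x j 0| <= t /\ gr x j 0 * x j 0 = t * `|x j 0|.

Lemma perturb lam (x : 'cV[R]_n) j : is_lasso_minimizer T y lam x ->
  forall h, 0 <= - lam * (h * gr x j 0)
     + lam / 2 * (h ^+ 2 * \sum_i ((T *m ej j) i 0) ^+ 2)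
     + (`|x j 0 + h| - `|x j 0|).
Proof.
move=> Hmin h; have := Hmin (x + h *: ej j).
rewrite obj_expand.
have -> : \sum_j0 gr x j0 0 * (h *: ej j) j0 0 = h * gr x j 0.
  rewrite -(sum_delta (fun i => h * gr x i 0) j); apply: eq_bigr => i _.
  rewrite /ej !mxE eqxx andbT; ring.
have -> : \sum_i ((T *m (h *: ej j)) i 0) ^+ 2 =
          h ^+ 2 * \sum_i ((T *m ej j) i 0) ^+ 2.
  rewrite mulr_sumr; apply: eq_bigr => i _; rewrite -scalemxAr mxE; ring.
have -> : \sum_j0 (`|x j0 0 + (h *: ej j) j0 0| - `|x j0 0|) =
          `|x j 0 + h| - `|x j 0|.
  rewrite (bigD1 j) //= big1 ?addr0; first by rewrite /ej !mxE !eqxx mulr1.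
  by move=> i /negbTE Hi; rewrite /ej !mxE Hi mulr0 addr0 subrr.
lra.
Qed.

Lemma kkt_nec lam (x : 'cV[R]_n) : 0 < lam -> is_lasso_minimizer T y lam x ->
  KKT lam^-1 x.
Proof.
move=> lam0 Hmin j.
set C := \sum_i ((T *m ej j) i 0) ^+ 2.
have C0 : 0 <= C by apply: sumr_ge0 => i _; apply: sqr_ge0.
set g := gr x j 0.
have H1 : lam * `|g| <= 1.
  rewrite -subr_le0; apply: (@eps_lemma _ _ (lam / 2 * C)).
    by rewrite mulr_ge0 // divr_ge0 // ltW.
  move=> e e0 e1; have := perturb j Hmin (e * Num.sg g).
  have Hn : `|x j 0 + e * Num.sg g| - `|x j 0| <= e.
    have := ler_normD (x j 0) (e * Num.sg g); rewrite normrM gtr0_norm //.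
    have := sg_le1 g; nra.
  have Hs : (e * Num.sg g) ^+ 2 <= e ^+ 2.
    by rewrite exprMn sqr_sg; case: (g != 0); rewrite ?mulr1 ?mulr0 ?sqr_ge0.
  rewrite -[e * Num.sg g * g]mulrA sgM -/C => H.
  have : 0 <= e * (- lam * `|g| + lam / 2 * e * C + 1).
    have h1 : lam / 2 * (((e * Num.sg g) ^+ 2) * C) <= lam / 2 * (e ^+ 2 * C).
      by apply: ler_wpM2l; [rewrite divr_ge0 ?ltW | apply: ler_wpM2r].
    have -> : e * (- lam * `|g| + lam / 2 * e * C + 1) =
      - lam * (e * `|g|) + lam / 2 * (e ^+ 2 * C) + e by ring.
    lra.
  by rewrite pmulr_rge0 // => H2; nra.
have Hg : `|g| <= lam^-1 by rewrite -[X in _ <= X]mul1r ler_pdivlMr // mulrC.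
split => //.
have [->|xn0] := eqVneq (x j 0) 0; first by rewrite mulr0 normr0 mulr0.
have H2 : `|x j 0| <= lam * (g * x j 0).
  rewrite -subr_le0; apply: (@eps_lemma _ _ (lam / 2 * (x j 0 ^+ 2 * C))).
    by apply: mulr_ge0; [rewrite divr_ge0 ?ltW | rewrite mulr_ge0 ?sqr_ge0].
  move=> e e0 e1; have := perturb j Hmin (- (e * x j 0)).
  have -> : `|x j 0 + - (e * x j 0)| = (1 - e) * `|x j 0|.
    by rewrite -{1}[x j 0]mul1r -mulrBl normrM ger0_norm // subr_ge0 ltW.
  rewrite -/C => H.
  have : 0 <= e * (lam * (g * x j 0) + lam / 2 * e * (x j 0 ^+ 2 * C) - `|x j 0|).
    have -> : e * (lam * (g * x j 0) + lam / 2 * e * (x j 0 ^+ 2 * C) - `|x j 0|) =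
       - lam * (- (e * x j 0) * g) + lam / 2 * ((- (e * x j 0)) ^+ 2 * C) + ((1 - e) * `|x j 0| - `|x j 0|).
      by ring.
    exact: H.
  by rewrite pmulr_rge0 // => H2; nra.
have H3 : lam * (g * x j 0) <= `|x j 0|.
  have h1 : g * x j 0 <= `|g| * `|x j 0| by rewrite -normrM ler_norm.
  have h2 : lam * (g * x j 0) <= lam * (`|g| * `|x j 0|) by rewrite ler_pM2l.
  have h3 : (lam * `|g|) * `|x j 0| <= 1 * `|x j 0| by rewrite ler_wpM2r.
  rewrite mulrA mul1r in h3 h2; lra.
have E : lam * (g * x j 0) = `|x j 0| by apply/eqP; rewrite eq_le H2 H3.
by rewrite -E mulrA mulVf ?mul1r // gt_eqF.
Qed.

Hypothesis T_inj : injective (@mulmx R m n 1 T).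

Lemma kkt_unique t (c x : 'cV[R]_n) : 0 < t -> KKT t c ->
  is_lasso_minimizer T y t^-1 x -> x = c.
Proof.
move=> t0 Hk Hmin.
have lam0 : 0 < t^-1 by rewrite invr_gt0.
have := Hmin c; rewrite -[x](addrNK c) addrC obj_expand.
set z := x - c.
have Hterm : 0 <= \sum_j (`|c j 0 + z j 0| - `|c j 0|) - t^-1 * \sum_j gr c j 0 * z j 0.
  rewrite mulr_sumr -sumrB; apply: sumr_ge0 => j _.
  have [Hb He] := Hk j.
  set u := t^-1 * gr c j 0.
  have Hu : `|u| <= 1 by rewrite normrM gtr0_norm // ler_pdivrMl // mulr1.
  have Huc : u * c j 0 = `|c j 0| by rewrite /u -mulrA He mulrA mulVf ?mul1r // gt_eqF.
  have : u * (c j 0 + z j 0) <= `|c j 0 + z j 0|.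
    apply: le_trans (ler_norm _) _; rewrite normrM.
    by rewrite -[X in _ <= X]mul1r ler_wpM2r.
  rewrite mulrDr Huc /u; lra.
have Hq : 0 <= \sum_i ((T *m z) i 0) ^+ 2 by apply: sumr_ge0 => i _; apply: sqr_ge0.
move=> H.
have Hq0 : \sum_i ((T *m z) i 0) ^+ 2 = 0.
  apply/eqP; rewrite eq_le Hq andbT.
  have : t^-1 / 2 * \sum_i ((T *m z) i 0) ^+ 2 <= 0 by lra.
  by rewrite pmulr_rle0 // divr_gt0.
have Tz0 : T *m z = T *m 0.
  rewrite mulmx0; apply/matrixP => i k; rewrite ord1 mxE.
  have := psumr_eq0P (fun i _ => sqr_ge0 ((T *m z) i 0)) Hq0; move=> /(_ i isT).
  by move/eqP; rewrite sqrf_eq0 mxE => /eqP ->; rewrite mxE.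
by rewrite (T_inj Tz0) addr0.
Qed.

Definition Emb (J : {set 'I_n}) : 'M[R]_(n, #|J|) := \matrix_(i, k) (i == enum_val k)%:R.

Lemma colsubE J : col_submx T J = T *m Emb J.
Proof.
apply/matrixP => i k; rewrite !mxE.
rewrite (bigD1 (enum_val k)) //= big1 ?addr0; first by rewrite mxE eqxx mulr1.
by move=> j /negbTE Hj; rewrite mxE Hj mulr0.
Qed.

Lemma EtE J : (Emb J)^T *m Emb J = 1%:M.
Proof.
apply/matrixP => p q; rewrite !mxE.
rewrite (bigD1 (enum_val p)) //= big1 ?addr0.
  by rewrite !mxE eqxx mul1r (inj_eq enum_val_inj) eq_sym.
by move=> j /negbTE Hj; rewrite !mxE Hj mul0r.
Qed.

Lemma Et_entry J (v : 'cV[R]_n) k : ((Emb J)^T *m v) k 0 = v (enum_val k) 0.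
Proof.
rewrite mxE (bigD1 (enum_val k)) //= big1 ?addr0; first by rewrite !mxE eqxx mul1r.
by move=> j /negbTE Hj; rewrite !mxE Hj mul0r.
Qed.

Lemma EEt_supp (J : {set 'I_n}) (z : 'cV[R]_n) : (forall i, i \notin J -> z i 0 = 0) ->
  Emb J *m ((Emb J)^T *m z) = z.
Proof.
move=> Hz; apply/matrixP => i k; rewrite ord1 mxE.
have [iJ|niJ] := boolP (i \in J).
  rewrite (bigD1 (enum_rank_in iJ i)) //= big1 ?addr0.
    by rewrite Et_entry enum_rankK_in // mxE enum_rankK_in // eqxx mul1r.
  move=> p Hp; rewrite mxE; case: eqP => [Hi|]; last by rewrite mul0r.
  by move: Hp; rewrite -(inj_eq enum_val_inj) enum_rankK_in // -Hi eqxx.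
rewrite Hz // big1 // => p _; rewrite mxE; case: eqP => [Hi|]; last by rewrite mul0r.
by move: niJ; rewrite Hi enum_valP.
Qed.

Lemma gram_unit J : (col_submx T J)^T *m col_submx T J \in unitmx.
Proof.
rewrite colsubE; set A := T *m Emb J.
rewrite unitmxE unitfE; apply/negP => /det0P [v nv vG].
have Hw : A *m v^T = 0.
  have H0 : (A *m v^T)^T *m (A *m v^T) = 0.
    by rewrite trmx_mul trmxK mulmxA -(mulmxA v) vG mul0mx.
  apply/matrixP => i k; rewrite ord1 [RHS]mxE.
  have := congr1 (fun M : 'M[R]_1 => M 0 0) H0; rewrite dotE mxE => Hs.
  have := psumr_eq0P (fun i _ => sqr_ge0 ((A *m v^T) i 0)) Hs; move=> /(_ i isT).
  by move/eqP; rewrite sqrf_eq0 => /eqP.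
have : T *m (Emb J *m v^T) = T *m 0 by rewrite mulmx0 mulmxA.
move/T_inj => Hev.
have : v^T = 0 by rewrite -[v^T]mul1mx -EtE -mulmxA Hev mulmx0.
by move/(congr1 trmx); rewrite trmxK trmx0 => Hv; move: nv; rewrite Hv eqxx.
Qed.

Definition Mx J : 'M[R]_n := Emb J *m S_of T J *m (Emb J)^T.

Lemma Mx_entry J i l :
  Mx J i l = \sum_q (\sum_p (i == enum_val p)%:R * S_of T J p q) * (l == enum_val q)%:R.
Proof. by rewrite !mxE; apply: eq_bigr => q _; rewrite !mxE; congr (_ * _); apply: eq_bigr => p _; rewrite mxE. Qed.

Lemma Mx_row0 (J : {set 'I_n}) i l : i \notin J -> Mx J i l = 0.
Proof.
move=> ni; rewrite Mx_entry big1 // => q _; rewrite big1 ?mul0r // => p _.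
case: eqP => [Hi|]; last by rewrite mul0r.
by move: ni; rewrite Hi enum_valP.
Qed.

Lemma Mx_col0 (J : {set 'I_n}) i l : l \notin J -> Mx J i l = 0.
Proof.
move=> nl; rewrite Mx_entry big1 // => q _.
case: eqP => [Hi|]; last by rewrite mulr0.
by move: nl; rewrite Hi enum_valP.
Qed.

Lemma Mx_ev J p q : Mx J (enum_val p) (enum_val q) = S_of T J p q.
Proof.
rewrite Mx_entry (bigD1 q) //= eqxx mulr1 [X in _ + X]big1 ?addr0.
  rewrite (bigD1 p) //= eqxx mul1r big1 ?addr0 //.
  by move=> p' /negbTE Hp; rewrite (inj_eq enum_val_inj) eq_sym Hp mul0r.
by move=> q' /negbTE Hq; rewrite (inj_eq enum_val_inj) eq_sym Hq mulr0.
Qed.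

Lemma EtGE J : (Emb J)^T *m T^T *m T *m Emb J = (col_submx T J)^T *m col_submx T J.
Proof. by rewrite colsubE trmx_mul !mulmxA. Qed.

Lemma Mx_a (J : {set 'I_n}) (w : 'cV[R]_n) i : i \in J -> (G *m (Mx J *m w)) i 0 = w i 0.
Proof.
move=> iJ.
have H : (Emb J)^T *m (G *m (Mx J *m w)) = (Emb J)^T *m w.
  rewrite /Mx /G !mulmxA EtGE /S_of mulmxV ?gram_unit // mul1mx.
  by [].
have := congr1 (fun M : 'cV[R]_#|J| => M (enum_rank_in iJ i) 0) H.
by rewrite !Et_entry enum_rankK_in.
Qed.

Lemma Mx_b (J : {set 'I_n}) (z : 'cV[R]_n) : (forall i, i \notin J -> z i 0 = 0) ->
  Mx J *m (G *m z) = z.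
Proof.
move=> Hz; rewrite -{1}(EEt_supp Hz) /Mx.
rewrite /G !mulmxA.
have -> : Emb J *m S_of T J *m (Emb J)^T *m T^T *m T *m Emb J =
   Emb J *m (S_of T J *m ((Emb J)^T *m T^T *m T *m Emb J)) by rewrite !mulmxA.
rewrite EtGE /S_of mulVmx ?gram_unit // mulmx1 -mulmxA.
exact: EEt_supp.
Qed.

Hypothesis T_pcc : positive_cone_condition T.

Lemma Mx_c (J : {set 'I_n}) k : k \in J ->
  0 <= Mx J k k - \sum_(l | l != k) `|Mx J k l|.
Proof.
move=> kJ.
have J0 : J != set0 by apply/set0Pn; exists k.
have := T_pcc J0 (enum_rank_in kJ k).
set p := enum_rank_in kJ k.
have kp : k = enum_val p by rewrite /p enum_rankK_in.
have -> : \sum_(l | l != k) `|Mx J k l| = \sum_(q < #|J| | q != p) `|S_of T J p q|.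
  rewrite (bigID (fun l => l \in J)) /= [X in _ + X]big1 ?addr0; last first.
    by move=> l /andP [_ nl]; rewrite Mx_col0 // normr0.
  rewrite (eq_bigl (fun l => (l \in J) && (l != k))); last by move=> l; rewrite andbC.
  rewrite big_enum_val_cond; apply: eq_big => q.
    by rewrite kp (inj_eq enum_val_inj).
  by rewrite kp Mx_ev.
by rewrite kp Mx_ev.
Qed.

Lemma Mx_pos (J : {set 'I_n}) k : k \in J -> 0 < Mx J k k.
Proof.
move=> kJ; have Hc := Mx_c kJ.
rewrite lt_def; apply/andP; split; last first.
  apply: le_trans Hc _; rewrite lerBlDr lerDl; apply: sumr_ge0 => l _; exact: normr_ge0.
apply/negP => /eqP Hkk.
have Hs : \sum_(l | l != k) `|Mx J k l| = 0.
  have Hs0 : 0 <= \sum_(l | l != k) `|Mx J k l| by apply: sumr_ge0 => l _; exact: normr_ge0.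
  have : \sum_(l | l != k) `|Mx J k l| <= 0 by move: Hc; rewrite Hkk sub0r oppr_ge0.
  lra.
have Hz : forall l, Mx J k l = 0.
  move=> l; have [->//|lk] := eqVneq l k.
  by apply/normr0_eq0; apply: (psumr_eq0P (fun l _ => normr_ge0 (Mx J k l)) Hs).
have Hb : (forall i, i \notin J -> ej k i 0 = 0).
  by move=> i ni; rewrite /ej mxE; case: eqP => // Hi; move: ni; rewrite Hi kJ.
have := congr1 (fun M : 'cV[R]_n => M k 0) (Mx_b Hb).
rewrite mxE big1; last by move=> l _; rewrite Hz mul0r.
by rewrite /ej mxE !eqxx => /eqP; rewrite eq_sym oner_eq0.
Qed.

Definition supp (a : 'cV[R]_n) : {set 'I_n} := [set i | a i 0 != 0].

Definition Box (a b : 'cV[R]_n) :=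
  forall i, 0 <= a i 0 * b i 0 /\ `|b i 0| <= `|a i 0|.

Lemma Box_trans a b c : Box a b -> Box b c -> Box a c.
Proof.
move=> Hab Hbc i; have [h1 h2] := Hab i; have [h3 h4] := Hbc i.
split; last exact: le_trans h4 h2.
have [b0|bn0] := eqVneq (b i 0) 0.
  by move: h4; rewrite b0 normr0 normr_le0 => /eqP ->; rewrite mulr0.
have hb : 0 < b i 0 ^+ 2 by rewrite exprn_even_gt0.
have : 0 <= (a i 0 * b i 0) * (b i 0 * c i 0) by apply: mulr_ge0.
have -> : a i 0 * b i 0 * (b i 0 * c i 0) = (a i 0 * c i 0) * b i 0 ^+ 2 by ring.
by rewrite pmulr_lge0.
Qed.

Definition sgv (a : 'cV[R]_n) : 'cV[R]_n := \col_i Num.sg (a i 0).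
Definition dir (a : 'cV[R]_n) : 'cV[R]_n := Mx (supp a) *m sgv a.

Lemma supp_out (a : 'cV[R]_n) i : i \notin supp a -> a i 0 = 0.
Proof. by rewrite inE negbK => /eqP. Qed.

Lemma sg_sq (v : R) : v != 0 -> Num.sg v * Num.sg v = 1.
Proof. by move=> h; rewrite -expr2 sqr_sg h. Qed.

Lemma normr_sg1 (v : R) : v != 0 -> `|Num.sg v| = 1.
Proof. by move=> h; rewrite normr_sg h. Qed.

Lemma dirE a i : dir a i 0 = \sum_l Mx (supp a) i l * Num.sg (a l 0).
Proof. by rewrite /dir [LHS]mxE; apply: eq_bigr => l _; rewrite [sgv a l 0]mxE. Qed.

Lemma dir_out a i : i \notin supp a -> dir a i 0 = 0.
Proof. by move=> ni; rewrite dirE big1 // => l _; rewrite Mx_row0 // mul0r. Qed.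

Lemma dir_G a i : i \in supp a -> (G *m dir a) i 0 = Num.sg (a i 0).
Proof. by move=> iJ; rewrite /dir Mx_a // mxE. Qed.

Lemma dir_mono a i : i \in supp a -> 0 <= Num.sg (a i 0) * dir a i 0.
Proof.
move=> iJ; have ai : a i 0 != 0 by move: iJ; rewrite inE.
have Hc := Mx_c iJ.
rewrite dirE (bigD1 i) //= mulrDr.
have -> : Num.sg (a i 0) * (Mx (supp a) i i * Num.sg (a i 0)) = Mx (supp a) i i.
  by rewrite mulrCA sg_sq // mulr1.
set S := \sum_(l | l != i) _.
have : - \sum_(l | l != i) `|Mx (supp a) i l| <= Num.sg (a i 0) * S.
  rewrite mulr_sumr -sumrN; apply: ler_sum => l _.
  set z := _ * (_ * _).
  have h1 : - z <= `|z| by rewrite -normrN ler_norm.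
  have h2 : `|z| <= `|Mx (supp a) i l|.
    rewrite /z !normrM -[X in _ <= X]mul1r; apply: ler_pM => //.
      by rewrite mulr_ge0.
      exact: sg_le1.
    by rewrite -[X in _ <= X]mulr1; apply: ler_pM => //; exact: sg_le1.
  lra.
lra.
Qed.

Lemma dir_slope a k : k \notin supp a -> `|(G *m dir a) k 0| <= 1.
Proof.
move=> nk; set K := supp a :|: [set k].
have kK : k \in K by rewrite !inE eqxx orbT.
have Hsup : forall i, i \notin K -> dir a i 0 = 0.
  by move=> i; rewrite !inE negb_or => /andP [ni _]; apply: dir_out; rewrite inE.
have := congr1 (fun M : 'cV[R]_n => M k 0) (Mx_b Hsup).
rewrite dir_out // mxE (bigD1 k) //= => H.
set S := \sum_(l | l != k) _ in H.
have HS : `|S| <= \sum_(l | l != k) `|Mx K k l|.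
  apply: le_trans (ler_norm_sum _ _ _) _; apply: ler_sum => l lk.
  rewrite normrM; have [lJ|nlJ] := boolP (l \in supp a).
    by rewrite dir_G // -[X in _ <= X]mulr1 ler_wpM2l // sg_le1.
  by rewrite Mx_col0 ?normr0 ?mul0r // in_setU in_set1 negb_or nlJ lk.
have Hc := Mx_c kK; have Hp := Mx_pos kK.
have E : `|Mx K k k * (G *m dir a) k 0| = `|S| by rewrite -normrN; congr `|_|; lra.
rewrite normrM gtr0_norm // in E.
rewrite -(ler_pM2l Hp) mulr1; lra.
Qed.

Variable x : R -> 'cV[R]_n.
Hypothesis x_min : forall lam : R, 0 < lam -> is_lasso_minimizer T y lam (x lam).

Definition X t := x t^-1.

Lemma X_kkt t : 0 < t -> KKT t (X t).
Proof.
move=> t0; have := @kkt_nec t^-1 (X t); rewrite invrK; apply.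
  by rewrite invr_gt0.
by apply: x_min; rewrite invr_gt0.
Qed.

Lemma X_uniq t c : 0 < t -> KKT t c -> X t = c.
Proof. by move=> t0 Hk; apply: (kkt_unique t0 Hk); apply: x_min; rewrite invr_gt0. Qed.

Lemma gr_lin (a u : 'cV[R]_n) (d : R) i :
  gr (a - d *: u) i 0 = gr a i 0 + d * (G *m u) i 0.
Proof. by rewrite /gr mulmxBr -scalemxAr !mxE; ring. Qed.

Lemma kkt_sg t (a : 'cV[R]_n) i : KKT t a -> a i 0 != 0 -> gr a i 0 = t * Num.sg (a i 0).
Proof.
move=> Hk ai; have [_ He] := Hk i.
apply: (mulIf ai); rewrite He -mulrA; congr (_ * _).
by rewrite sgM.
Qed.

Section Step.
Variables (t : R) (a : 'cV[R]_n).
Hypotheses (t0 : 0 < t) (Ha : KKT t a).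

Let J := supp a.
Let u := dir a.
Definition cpath r := a - (r - t) *: u.

Lemma cpath_E r i : cpath r i 0 = a i 0 - (r - t) * u i 0.
Proof. by rewrite !mxE. Qed.

Lemma cpath_out r i : i \notin J -> cpath r i 0 = 0.
Proof. by move=> ni; rewrite cpath_E supp_out // dir_out // mulr0 subr0. Qed.

Lemma cpath_sg r i : Num.sg (a i 0) * cpath r i 0 = `|a i 0| - (r - t) * (Num.sg (a i 0) * u i 0).
Proof. by rewrite cpath_E mulrBr sgM; ring. Qed.

Definition okr r := forall i, i \in J -> 0 <= Num.sg (a i 0) * cpath r i 0.

Lemma cpath_kkt r : t <= r -> okr r -> KKT r (cpath r).
Proof.
move=> tr Hok i; rewrite /cpath gr_lin.
have [iJ|niJ] := boolP (i \in J).
  have ai : a i 0 != 0 by move: iJ; rewrite inE.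
  rewrite (kkt_sg Ha ai) dir_G // -mulrDl [t + _]addrC subrK.
  have Hn1 := normr_sg1 ai.
  have r0 : 0 < r by apply: lt_le_trans tr.
  split; first by rewrite normrM Hn1 mulr1 gtr0_norm.
  rewrite -/(cpath r) -mulrA; congr (_ * _).
  by rewrite -[RHS]mul1r -Hn1 -normrM ger0_norm //; apply: Hok.
have ai : a i 0 = 0 by apply: supp_out.
have Hb := dir_slope niJ; have [Hg _] := Ha i.
rewrite -/(cpath r) cpath_out // mulr0 normr0 mulr0; split => //.
apply: le_trans (ler_normD _ _) _; rewrite normrM.
have : `|r - t| * `|(G *m dir a) i 0| <= `|r - t| * 1 by rewrite ler_wpM2l.
rewrite mulr1 ger0_norm ?subr_ge0 //; lra.
Qed.

Lemma cpath_box r : t <= r -> okr r -> Box a (cpath r).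
Proof.
move=> tr Hok i.
have [iJ|niJ] := boolP (i \in J); last first.
  by rewrite cpath_out // supp_out // mul0r normr0 lexx.
have ai : a i 0 != 0 by move: iJ; rewrite inE.
have Hn1 := normr_sg1 ai.
have H1 := Hok i iJ; have Hm := dir_mono iJ.
split.
  have -> : a i 0 * cpath r i 0 = `|a i 0| * (Num.sg (a i 0) * cpath r i 0).
    by rewrite -{1}(mulr_sg_norm (a i 0)); ring.
  by rewrite mulr_ge0.
rewrite -[`|cpath r i 0|]mul1r -Hn1 -normrM ger0_norm // cpath_sg -/u.
have : 0 <= (r - t) * (Num.sg (a i 0) * u i 0) by rewrite mulr_ge0 // subr_ge0.
lra.
Qed.

End Step.

Lemma step t : 0 < t ->
  (forall r, 0 < r -> (#|supp (X r)| < #|supp (X t)|)%N -> forall s, r <= s -> Box (X r) (X s)) ->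
  forall s, t <= s -> Box (X t) (X s).
Proof.
move=> t0 IH s ts.
have Ha := X_kkt t0.
set a := X t in Ha IH *.
set J := supp a in IH *.
have Hw : forall i r, Num.sg (a i 0) * cpath t a r i 0 =
     `|a i 0| - (r - t) * (Num.sg (a i 0) * dir a i 0) by move=> i r; apply: cpath_sg.
have HA : forall i, i \in J -> 0 < `|a i 0| by move=> i; rewrite inE normr_gt0.
have [Hall|Hnall] := boolP [forall i, (i \in J) ==> (0 <= Num.sg (a i 0) * cpath t a s i 0)].
  have ok : okr t a s by move=> i iJ; move/forallP/(_ i): Hall; rewrite iJ.
  rewrite (X_uniq (lt_le_trans t0 ts) (cpath_kkt t0 Ha ts ok)); exact: cpath_box ts ok.
move/forallPn: Hnall => [i0]; rewrite negb_imply -ltNge => /andP [i0J i0neg].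
pose D := [pred i | (i \in J) && (Num.sg (a i 0) * cpath t a s i 0 < 0)].
pose w := fun i => Num.sg (a i 0) * dir a i 0.
pose tau := fun i => t + `|a i 0| / w i.
have Di0 : D i0 by rewrite /D /= i0J.
have HD : forall i, D i -> 0 < w i /\ `|a i 0| < (s - t) * w i.
  move=> i /andP [iJ neg]; have Ai := HA i iJ.
  rewrite Hw in neg; rewrite -/(w i) in neg.
  have st : 0 <= s - t by rewrite subr_ge0.
  split; last by lra.
  rewrite ltNge; apply/negP => wle.
  have : (s - t) * w i <= 0 by rewrite mulr_ge0_le0.
  lra.
case: (arg_minP tau Di0) => im Dim Hmin.
have [wim Aim] := HD im Dim.
have imJ : im \in J by case/andP: Dim.
set r1 := tau im.
have Hr1t : r1 - t = `|a im 0| / w im by rewrite /r1 /tau; ring.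
have Hr1w : (r1 - t) * w im = `|a im 0| by rewrite Hr1t mulrAC -mulrA mulfV ?gt_eqF // mulr1.
have r1t : t < r1.
  by rewrite -subr_gt0 Hr1t divr_gt0 // HA.
have r1s : r1 <= s.
  rewrite -(lerD2r (- t)) -/(r1 - t) -/(s - t) Hr1t ler_pdivrMr //; lra.
have ok : okr t a r1.
  move=> i iJ; rewrite Hw -/(w i).
  have Ai := HA i iJ.
  have [wle|wgt] := lerP (w i) 0.
    have : (r1 - t) * w i <= 0 by rewrite mulr_ge0_le0 // subr_ge0 ltW.
    lra.
  have [Di|nDi] := boolP (D i).
    have := Hmin i Di; rewrite -/r1 /tau => h.
    have : r1 - t <= `|a i 0| / w i by lra.
    rewrite ler_pdivlMr //; lra.
  have : 0 <= Num.sg (a i 0) * cpath t a s i 0.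
    by rewrite leNgt; apply/negP => h; move: nDi; rewrite /D /= iJ h.
  rewrite Hw -/(w i) => h.
  have hh : r1 - t <= s - t by lra.
  have : (r1 - t) * w i <= (s - t) * w i by apply: ler_wpM2r => //; exact: ltW.
  lra.
have Hk1 := cpath_kkt t0 Ha (ltW r1t) ok.
have r10 : 0 < r1 by apply: lt_trans r1t.
have EX := X_uniq r10 Hk1.
have Hbox := cpath_box (ltW r1t) ok.
rewrite -EX in Hbox.
apply: (Box_trans Hbox); apply: IH => //.
apply: proper_card; apply/properP; split.
  apply/subsetP => i; rewrite EX inE; apply: contraR => ni.
  by rewrite cpath_out // eqxx.
exists im => //.
rewrite EX inE negbK.
have ai : a im 0 != 0 by move: imJ; rewrite inE.
have : Num.sg (a im 0) * cpath t a r1 im 0 = 0 by rewrite Hw -/(w im) Hr1w subrr.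
by move/eqP; rewrite mulf_eq0 sgr_eq0 (negbTE ai).
Qed.

Lemma main_box k : forall t, 0 < t -> (#|supp (X t)| <= k)%N ->
  forall s, t <= s -> Box (X t) (X s).
Proof.
elim: k => [|k IHk] t t0 Hk; apply: step => // r r0 Hr.
  by move: (leq_trans Hr Hk).
by apply: IHk => //; rewrite -ltnS; apply: leq_trans Hr Hk.
Qed.

End Lasso.

Unset Implicit Arguments.

Theorem mainTheorem18 (R : realType) (m n : nat) (T : 'M[R]_(m, n)) (y : 'cV[R]_m)
    (x : R -> 'cV[R]_n)
    (T_inj : injective (@mulmx R m n 1 T))
    (T_pcc : positive_cone_condition T)
    (x_min : forall lam : R, 0 < lam -> is_lasso_minimizer T y lam (x lam)) :
  forall lam : R, 0 < lam ->
    forall i : 'I_n, x lam i 0 != 0 ->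
      forall mu : R, 0 < mu -> mu <= lam ->
        `|x mu i 0| <= `|x lam i 0|.
Proof.
move=> lam lam0 i _ mu mu0 mul.
have t0 : 0 < lam^-1 by rewrite invr_gt0.
have ts : lam^-1 <= mu^-1 by rewrite lef_pV2 ?posrE.
have := main_box T_inj T_pcc x_min t0 (leqnn _) ts i.
by rewrite /X !invrK => -[].
Qed.
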